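(* Let $u$ and $v$ be vertices of $G$. When routing from $u$ to $v$, the routing algorithm reaches $v$ after traversing at most $O(\log n)$ edges.
   Context: Let $T$ be a rooted tree on $n$ vertices with positive edge weights; $\delta_T(a,b)$ is the weight of the path in $T$ from $a$ to $b$. Ancestor/descendant refer to $T$, and a vertex counts as its own ancestor and descendant; ''deepest''/''highest'' refer to depth in $T$. $T_v$ is the subtree of $T$ rooted at $v$. For every non-leaf vertex $v$ fix a child $c_1(v)$ with $|T_{c_1(v)}|$ maximal; edges $(v,c_1(v))$ are leftmost. A subtree $R$ of $T$ is rooted at its vertex closest to the root, $rt(R)$, and inherits the leftmost labelling; $R_v$ is the subtree of $R$ rooted at $v$. $P_R(v)$ is the longest downward path from $v$ in $R$ using only leftmost edges, with last vertex $l(v)$; $l(R):=l(rt(R))$. A vertex $v$ of $R$ is $d$-balanced if $|R_{c_1(v)}|\le |R|-d$ (with $|R_{c_1(v)}|=0$ if $c_1(v)$ is undefined or not in $R$); $b_d(v)$ is the first $d$-balanced vertex on $P_R(v)$, or NULL. $CV(R,d)=\emptyset$ if $b_d(rt(R))$ is NULL, else $\{b\}\cup\bigcup_w CV(R_w,d)$ with $b=b_d(rt(R))$ and $w$ ranging over children of $b$ in $R$. Fix an integer $k\ge4$; for a subtree $R$ with $m$ vertices, $C_R=V(R)$ if $k\ge m/2-1$, else $C_R=CV(R,m/k)\cup\{l(R),rt(R)\}$. Canonical subtrees: $T$ is canonical; if $R$ is canonical, each component of $R$ minus $C_R$ is canonical. Each vertex $v$ lies in $C_R$ for exactly one canonical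 $R$, denoted $T^v$. The spanner $G$ has vertex set $V(T)$ and edges: all edges of $T$, and all pairs of distinct vertices of $C_R$ for every canonical $R$; edge $(a,b)$ has weight $\delta_T(a,b)$. Routing algorithm from current vertex $u$ to destination $v$, repeated until $v$ is reached: Case 0: if $v$ is adjacent to $u$, move to $v$. Case 1: $u$ is an ancestor of $v$; let $X$ be the vertices of $C_{T^u}$ that are ancestors of $v$, $x$ the deepest; move to $x$, then to the child of $x$ that is an ancestor of $v$. Case 2: $u$ is a descendant of $v$; let $X$ be the vertices of $C_{T^u}$ that are descendants of $v$ and ancestors of $u$, $x$ the highest; move to $x$, then to the parent of $x$. Case 3: $u$ is neither; let $X$ be the vertices of $C_{T^u}$ that are ancestors of $v$ but not of $u$, and $Y$ those that are ancestors of $u$ but not of $v$, $y$ the highest vertex of $Y$. Case 3 a): $X=\emptyset$: move to $y$, then to the parent of $y$. Case 3 b): $X\neq\emptyset$: with $x$ the deepest vertex of $X$ and $x'$ the child of $x$ that is an ancestor of $v$, move to $x$, then to $x'$. (Moving to the current vertex means staying.) *)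

(* Defs.v *)
From mathcomp Require Import all_boot.
Set Implicit Arguments. Unset Strict Implicit. Unset Printing Implicit Defensive.

(* Edge weights play no role in the routing decisions nor in the
   number of edges traversed, hence they are omitted. *)
Definition is_rooted_tree (V : finType) (r : V) (parent : V -> V) : Prop :=
  parent r = r /\ forall x : V, exists i : nat, iter i parent x = r.

Section Routing.
Variables (V : finType) (parent : V -> V) (c1 : V -> option V) (k : nat).

Definition anc (a b : V) : bool := [exists i : 'I_#|V|.+1, iter i parent b == a].
Definition child (a c : V) : bool := (parent c == a) && (c != a).

Definition leftmost_choice : Prop :=
  (forall v, c1 v = None <-> forall c, ~~ child v c) /\
  (forall v c, c1 v = Some c ->
     child v c /\ forall c', child v c' -> #|[set x | anc c' x]| <= #|[set x | anc c x]|).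

Definition sub (R : {set V}) (v : V) : {set V} := R :&: [set x | anc v x].

Definition rt (R : {set V}) : option V :=
  [pick x in R | (parent x \notin R) || (parent x == x)].

Definition c1R (R : {set V}) (v : V) : option V :=
  if c1 v is Some c then (if c \in R then Some c else None) else None.

Definition sizeL (R : {set V}) (v : V) : nat :=
  if c1R R v is Some c then #|sub R c| else 0.

(* v is d-balanced in R for d = m/k :  |R_{c1 v}| <= |R| - m/k *)
Definition balanced (R : {set V}) (m : nat) (v : V) : bool :=
  k * sizeL R v + m <= k * #|R|.

Fixpoint lfollow (R : {set V}) (fuel : nat) (v : V) : V :=
  match fuel with
  | 0 => v
  | S f => if c1R R v is Some c then lfollow R f c else v
  end.
Definition lR (R : {set V}) (v : V) : V := lfollow R #|V| v.

Fixpoint bfind (R : {set V}) (m : nat) (fuel : nat) (v : V) : option V :=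
  match fuel with
  | 0 => None
  | S f => if balanced R m v then Some v
           else if c1R R v is Some c then bfind R m f c else None
  end.

Fixpoint CV (m : nat) (fuel : nat) (R : {set V}) : {set V} :=
  match fuel with
  | 0 => set0
  | S f =>
    match (if rt R is Some x then bfind R m #|V|.+1 x else None) with
    | None => set0
    | Some b => b |: \bigcup_(w in R | child b w) CV m f (sub R w)
    end
  end.

Definition C (R : {set V}) : {set V} :=
  if #|R| <= 2 * k + 2 then R
  else CV #|R| #|V|.+1 R :|:
       (if rt R is Some x then [set x; lR R x] else set0).

Definition adjT (x y : V) : bool := child x y || child y x.
Definition restr (A : {set V}) : rel V :=
  fun x y => [&& x \in A, y \in A & adjT x y].
Definition comp (A : {set V}) (x : V) : {set V} := [set y | connect (restr A) x y].

Inductive canonical : {set V} -> Prop :=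
  | canT : canonical setT
  | canC R x : canonical R -> x \in R :\: C R -> canonical (comp (R :\: C R) x).

Definition adjG (u v : V) : Prop :=
  adjT u v \/ exists R, [/\ canonical R, u \in C R, v \in C R & u != v].

Definition deepest (X : {set V}) (x : V) : Prop :=
  x \in X /\ forall z, z \in X -> anc z x.
Definition highest (X : {set V}) (x : V) : Prop :=
  x \in X /\ forall z, z \in X -> anc x z.

(* one iteration of cases 1-3 with C_{T^u} = C R; c = number of edges used
   (moving to x costs 1 edge unless x = u; then one tree edge) *)
Definition stepR (R : {set V}) (v u u' : V) (c : nat) : Prop :=
  (anc u v /\ exists x, deepest [set z in C R | anc z v] x /\
        child x u' /\ anc u' v /\ c = (x != u) + 1)
  \/
  (anc v u /\ ~~ anc u v /\ exists x, highest [set z in C R | anc v z && anc z u] x /\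
        u' = parent x /\ c = (x != u) + 1)
  \/
  (~~ anc u v /\ ~~ anc v u /\
    ( ([set z in C R | anc z v && ~~ anc z u] = set0 /\
       exists y, highest [set z in C R | anc z u && ~~ anc z v] y /\
         u' = parent y /\ c = (y != u) + 1)
    \/
      ([set z in C R | anc z v && ~~ anc z u] != set0 /\
       exists x, deepest [set z in C R | anc z v && ~~ anc z u] x /\
         child x u' /\ anc u' v /\ c = (x != u) + 1))).

Definition step (v u u' : V) (c : nat) : Prop :=
  u != v /\
  ((adjG u v /\ u' = v /\ c = 1) \/
   (~ adjG u v /\ exists R, [/\ canonical R, u \in C R & stepR R v u u' c])).

Inductive reach (v : V) : V -> nat -> Prop :=
  | reach0 : reach v v 0
  | reachS u u' c c' : step v u u' c -> reach v u' c' -> reach v u (c + c').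

Inductive run (v : V) : V -> nat -> Prop :=
  | run0 u : run v u 0
  | runS u u' c c' : step v u u' c -> run v u' c' -> run v u (c + c').

End Routing.

(* Main.v *)
Require Import Defs.
From mathcomp Require Import all_boot.
From mathcomp Require Import zify.
From Stdlib Require Classical_Prop.
Set Implicit Arguments. Unset Strict Implicit. Unset Printing Implicit Defensive.

Lemma arith1 x1 x2 x3 f : x1 - x2 <= f.+1 -> x2 < x3 -> x1 - x3 <= f.
Proof. lia. Qed.

Lemma arith2 a b n k : 4 <= k -> a <= b -> k * b < n -> 2 * a <= n.
Proof. move=> Hk ab kb; have : 4 * a <= k * b by apply: leq_mul. lia. Qed.

Lemma arith3 a b (x y : bool) : a < b -> 2 * a + x < 2 * b + y.
Proof. by case: x; case: y => /=; lia. Qed.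

Lemma arith4 a b n (x y : bool) : a < b -> b <= n -> 2 * ((n - b) + n) + x < 2 * ((n - a) + n) + y.
Proof. by case: x; case: y => /=; lia. Qed.

Lemma arith5 c c' a p : c <= 2 -> c' <= 4 * a + 2 -> a < p -> c + c' <= 4 * p + 2.
Proof. lia. Qed.

Lemma arith6 c c2 c3 a p : c <= 2 -> c2 <= 2 -> c3 <= 4 * a + 2 -> a < p -> c + (c2 + c3) <= 4 * p + 2.
Proof. lia. Qed.

Lemma arith7 c c2 p : c <= 2 -> c2 <= 2 -> 0 < p -> c + (c2 + 0) <= 4 * p + 2.
Proof. lia. Qed.

Lemma arith8 a b (x : bool) T : a <= T -> 2 * ((a - b) + a) + x <= 4 * T + 1.
Proof. by case: x => /=; lia. Qed.

Lemma arith9 P T m : m <= 4 * P + 2 -> P <= 4 * T + 1 -> m <= 16 * T.+1.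
Proof. lia. Qed.

Section Tree.
Variables (V : finType) (r : V) (parent : V -> V).
Hypothesis Htree : is_rooted_tree r parent.

Local Notation anc := (Defs.anc parent).

Lemma ancP a b : reflect (exists i, iter i parent b = a) (anc a b).
Proof.
apply: (iffP existsP) => [[i /eqP <-]|[i Hi]]; first by exists i.
have fc : fconnect parent b a by rewrite -Hi; apply: fconnect_iter.
have lt : findex parent b a < #|V|.+1.
  apply: (leq_trans (findex_max fc)); rewrite -size_orbit.
  rewrite -(card_uniqP (orbit_uniq _ _)); exact: leqW (max_card _).
by exists (Ordinal lt); rewrite /= iter_findex.
Qed.

Lemma anc_refl a : anc a a.
Proof. by apply/ancP; exists 0. Qed.

Lemma anc_trans a b c : anc a b -> anc b c -> anc a c.
Proof.
move=> /ancP[i Hi] /ancP[j Hj]; apply/ancP; exists (i + j).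
by rewrite iterD Hj.
Qed.

Lemma anc_parent x : anc (parent x) x.
Proof. by apply/ancP; exists 1. Qed.

Lemma iter_root i : iter i parent r = r.
Proof. by elim: i => //= i ->; case: Htree. Qed.

Lemma anc_root x : anc r x.
Proof. by case: Htree => _ /(_ x) [i Hi]; apply/ancP; exists i. Qed.

Lemma root_fix x : parent x = x -> x = r.
Proof.
move=> Hx; case: Htree => _ /(_ x) [i]; rewrite (_ : iter i parent x = x) //.
by elim: i => //= i ->.
Qed.

Lemma anc_antisym a b : anc a b -> anc b a -> a = b.
Proof.
move=> /ancP[i Hi] /ancP[j Hj].
have Hb : forall t, iter (t * (j + i)) parent b = b.
  by elim=> [|t IH] //; rewrite mulSn iterD IH iterD Hi Hj.
case: (posnP (j + i)) => [|pos].
  by move/eqP; rewrite addn_eq0 => /andP[/eqP j0 /eqP i0]; rewrite -Hi i0.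
case: Htree => _ /(_ b) [d Hd].
have br : b = r.
  rewrite -(Hb d) (_ : d * (j + i) = (d * (j + i) - d) + d); last first.
    by rewrite subnK // leq_pmulr.
  by rewrite iterD Hd iter_root.
by rewrite -Hi br iter_root.
Qed.

Lemma anc_total a b x : anc a x -> anc b x -> anc a b || anc b a.
Proof.
move=> /ancP[i Hi] /ancP[j Hj]; case: (leqP i j) => ij.
  by apply/orP; right; apply/ancP; exists (j - i); rewrite -Hi -iterD subnK.
by apply/orP; left; apply/ancP; exists (i - j); rewrite -Hj -iterD subnK // ltnW.
Qed.

Lemma anc_parentr a b : anc a b -> a != b -> anc a (parent b).
Proof.
move=> /ancP[[|i] Hi]; first by rewrite -Hi eqxx.
by move=> _; apply/ancP; exists i; rewrite -iterSr.
Qed.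

Lemma anc_child a b : anc a b -> a != b ->
  exists c, [/\ parent c = a, c != a & anc c b].
Proof.
move=> /ancP[i]; elim: i b => [|i IH] b; first by move=> /= ->; rewrite eqxx.
rewrite iterSr => Hi ab.
case: (eqVneq (parent b) a) => pa.
  by exists b; split => //; [rewrite eq_sym | exact: anc_refl].
have [c [c1 c2 c3]] : exists c, [/\ parent c = a, c != a & anc c (parent b)] by apply: IH; rewrite // eq_sym.
by exists c; split => //; apply: anc_trans c3 (anc_parent _).
Qed.

Lemma anc_parent_ne x : x != r -> parent x != x.
Proof. by apply: contra => /eqP /root_fix ->. Qed.

Definition dep x := #|[set a | anc a x]|.

Lemma dep_lt a b : anc a b -> a != b -> dep a < dep b.
Proof.
move=> ab nab; apply: proper_card; apply/properP; split.
  by apply/subsetP => z; rewrite !inE => /anc_trans; apply.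
exists b; rewrite !inE ?anc_refl //; apply/negP => ba.
by move: nab; rewrite (anc_antisym ab ba) eqxx.
Qed.

Lemma dep_le x : dep x <= #|V|.
Proof. exact: max_card. Qed.

Lemma dep_gt0 x : 0 < dep x.
Proof. by apply/card_gt0P; exists x; rewrite inE anc_refl. Qed.

Lemma anc_between a b x : anc a x -> anc b x -> anc a b -> anc b a -> a = b.
Proof. by move=> _ _; apply: anc_antisym. Qed.

End Tree.

Section Main.
Variables (V : finType) (r : V) (parent : V -> V) (c1 : V -> option V) (k : nat).
Hypothesis Htree : is_rooted_tree r parent.
Hypothesis Hlm : leftmost_choice parent c1.
Hypothesis Hk : 4 <= k.
Implicit Types (A B Q R S : {set V}) (a b q w x y z u v : V).

Local Notation anc := (Defs.anc parent).
Local Notation child := (Defs.child parent).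
Local Notation adjT := (Defs.adjT parent).
Local Notation restr := (Defs.restr parent).
Local Notation comp := (Defs.comp parent).
Local Notation rt := (Defs.rt parent).
Local Notation CC := (Defs.C parent c1 k).
Local Notation CV := (Defs.CV parent c1 k).
Local Notation canonical := (Defs.canonical parent c1 k).
Local Notation dep := (dep parent).

Lemma adjT_sym a b : adjT a b = adjT b a.
Proof. by rewrite /Defs.adjT orbC. Qed.

Lemma restr_sym A : symmetric (restr A).
Proof. by move=> a b; rewrite /Defs.restr adjT_sym andbCA. Qed.

Lemma connect_ind A (P : V -> Prop) x y :
  P x -> (forall a b, P a -> restr A a b -> P b) -> connect (restr A) x y -> P y.
Proof.
move=> Px Hs /connectP[p pp ->]; elim: p x Px pp => [|a p IH] x Px //=.
by move=> /andP[xa pa]; apply: (IH a) => //; apply: Hs xa.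
Qed.

Lemma connect_in A x y : x \in A -> connect (restr A) x y -> y \in A.
Proof. by move=> xA; apply: (connect_ind (P := fun y => y \in A)) => // a b _ /and3P[]. Qed.

Lemma comp_sub A x y : x \in A -> y \in comp A x -> y \in A.
Proof. by rewrite inE; apply: connect_in. Qed.

Lemma comp_self A x : x \in comp A x.
Proof. by rewrite inE connect0. Qed.

Lemma connect_mono A B x y : A \subset B -> connect (restr A) x y -> connect (restr B) x y.
Proof.
move=> /subsetP AB; apply: connect_sub => a b /and3P[aA bA ab].
by apply: connect1; rewrite /Defs.restr ab !AB.
Qed.

Lemma comp_mono A B x : A \subset B -> comp A x \subset comp B x.
Proof. by move=> AB; apply/subsetP => y; rewrite !inE; apply: connect_mono. Qed.

Lemma comp_eq A x y : y \in comp A x -> comp A y = comp A x.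
Proof.
rewrite inE => xy; apply/setP => z; rewrite !inE; apply/idP/idP.
  by apply: connect_trans.
by rewrite (sym_connect_sym (restr_sym A)) in xy; apply: connect_trans.
Qed.

Lemma connect_restrict A B x y : x \in B ->
  (forall a b, a \in B -> b \in A -> adjT a b -> b \in B) ->
  connect (restr A) x y -> connect (restr (A :&: B)) x y /\ y \in B.
Proof.
move=> xB cl; apply: (connect_ind (P := fun y => connect (restr (A :&: B)) x y /\ y \in B)) => [|a b [ca aB] /and3P[aA bA ab]]; first by rewrite connect0.
have bB := cl _ _ aB bA ab; split => //; apply: connect_trans ca (connect1 _).
by rewrite /Defs.restr !inE aA aB bA bB ab.
Qed.

Lemma comp_in_closed A B x y : x \in B ->
  (forall a b, a \in B -> b \in A -> adjT a b -> b \in B) ->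
  y \in comp A x -> y \in B.
Proof. by move=> xB cl; rewrite inE => /(connect_restrict xB cl) []. Qed.

Definition conv (Q : {set V}) q :=
  [/\ q \in Q, (forall y, y \in Q -> anc q y) &
      (forall y z, y \in Q -> anc q z -> anc z y -> z \in Q)].

Definition isTop (A : {set V}) q x :=
  [/\ anc q x, (forall w, anc q w -> anc w x -> w \in A) &
      (parent q \notin A) || (parent q == q)].

Lemma upwalk A q x : anc q x -> (forall w, anc q w -> anc w x -> w \in A) ->
  connect (restr A) x q.
Proof.
move=> /(ancP parent)[i]; elim: i x => [|i IH] x; first by move=> /= ->; rewrite connect0.
rewrite iterSr => Hi Hb.
have qp : anc q (parent x) by apply/ancP; exists i.
case: (eqVneq (parent x) x) => px.
  by apply: IH; rewrite px in Hi * => //.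
apply: connect_trans (connect1 _) (IH _ Hi _).
  have xA : x \in A := Hb _ (anc_trans qp (anc_parent _ _)) (anc_refl _ _).
  have pA : parent x \in A := Hb _ qp (anc_parent _ _).
  rewrite /Defs.restr xA pA /Defs.adjT /=; apply/orP; right.
  by rewrite /Defs.child eqxx eq_sym px.
by move=> w qw wp; apply: Hb => //; apply: anc_trans wp (anc_parent _ _).
Qed.

Lemma isTop_exists A x : x \in A -> exists q, isTop A q x.
Proof.
move=> xA.
pose P := fun y => anc y x && [forall w, anc y w && anc w x ==> (w \in A)].
have Px : P x.
  rewrite /P anc_refl /=; apply/forallP => w; apply/implyP => /andP[a b].
  by rewrite (anc_antisym Htree b a).
case: (arg_minnP dep Px) => q /andP[qx /forallP Hq] Hmin.
exists q; split => //; first by move=> w a b; move: (Hq w); rewrite a b.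
case: (boolP (parent q \in A)) => //= pA; case: (eqVneq (parent q) q) => //= pq.
have : P (parent q).
  rewrite /P (anc_trans (anc_parent _ _) qx) /=; apply/forallP => w.
  apply/implyP => /andP[pw wx].
  case/orP: (anc_total wx qx) => [wq|qw]; last by move: (Hq w); rewrite qw wx.
  case: (eqVneq w q) => [->|wq']; first by move: (Hq q); rewrite anc_refl qx.
  by rewrite -(anc_antisym Htree pw (anc_parentr wq wq')).
move/Hmin => Hle; have := dep_lt Htree (anc_parent parent q) pq; by rewrite ltnNge Hle.
Qed.

Lemma isTop_step A q a b : isTop A q a -> restr A a b -> isTop A q b.
Proof.
case=> qa qb qt /and3P[aA bA /orP[/andP[/eqP pb ba]|/andP[/eqP pb ba]]].
  split => //; first by apply: anc_trans qa _; rewrite -pb anc_parent.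
  move=> w qw wb; case: (eqVneq w b) => [->//|wb'].
  by apply: qb => //; rewrite -pb; apply: anc_parentr.
subst b; case: (eqVneq q a) => [qa'|qa'].
  by subst q; move: qt; rewrite bA /= eq_sym (negbTE ba).
split => //; first exact: anc_parentr.
by move=> w qw wb; apply: qb => //; apply: anc_trans wb (anc_parent _ _).
Qed.

Lemma isTop_connect A q x y : isTop A q x -> connect (restr A) x y -> isTop A q y.
Proof. by move=> H; apply: (connect_ind (P := isTop A q)) => // a b; apply: isTop_step. Qed.

Lemma conv_comp A x q : x \in A -> isTop A q x -> conv (comp A x) q.
Proof.
move=> xA Tq; have [qx qb _] := Tq; split.
- by rewrite inE; apply: upwalk qx qb.
- by move=> y; rewrite inE => /(isTop_connect Tq) [].
- move=> y z; rewrite inE => xy qz zy; rewrite inE.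
  have [_ qyb _] := isTop_connect Tq xy.
  apply: connect_trans xy _; apply: upwalk => //.
  by move=> w zw wy; apply: qyb => //; apply: anc_trans qz zw.
Qed.

Lemma conv_parent Q q x : conv Q q -> x \in Q -> x != q ->
  parent x \in Q /\ parent x != x.
Proof.
case=> qQ qa qc xQ xq; split; first by apply: qc xQ (anc_parentr (qa _ xQ) _) (anc_parent _ _); rewrite eq_sym.
apply/negP => /eqP /(root_fix Htree) xr.
have qr : q = r by apply: (anc_antisym Htree) (anc_root Htree q); rewrite -xr; apply: qa.
by move: xq; rewrite xr qr eqxx.
Qed.

Lemma conv_rt Q q : conv Q q -> rt Q = Some q.
Proof.
move=> cq; have [qQ qa qc] := cq; rewrite /Defs.rt.
case: pickP => [x /andP[xQ px]|/(_ q)]; last first.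
  case: (boolP (parent q \in Q)) => [pq|]; last by rewrite qQ.
  by rewrite qQ -(anc_antisym Htree (qa _ pq) (anc_parent _ _)) eqxx orbT.
case: (eqVneq x q) => [->//|xq].
by have [pQ px'] := conv_parent cq xQ xq; move: px; rewrite pQ (negbTE px').
Qed.

Lemma conv_top_unique Q q x : conv Q q -> x \in Q -> parent x \notin Q -> x = q.
Proof.
move=> cq xQ; case: (eqVneq x q) => // xq; by have [-> _] := conv_parent cq xQ xq.
Qed.

Lemma conv_setT : conv setT r.
Proof. by split => // y _; apply: anc_root. Qed.

Lemma conv_sub R q w : conv R q -> w \in R -> conv (R :&: [set x | anc w x]) w.
Proof.
case=> qR qa qc wR; split; first by rewrite !inE wR anc_refl.
  by move=> y; rewrite !inE => /andP[].
move=> y z; rewrite !inE => /andP[yR wy] wz zy; rewrite wz andbT.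
exact: qc yR (anc_trans (qa _ wR) wz) zy.
Qed.


Local Notation sub := (Defs.sub parent).
Local Notation sizeL := (Defs.sizeL parent c1).
Local Notation balanced := (Defs.balanced parent c1 k).
Local Notation c1R := (Defs.c1R c1).
Local Notation lfollow := (Defs.lfollow c1).
Local Notation lR := (Defs.lR c1).
Local Notation bfind := (Defs.bfind parent c1 k).

Lemma c1_child v c : c1 v = Some c -> parent c = v /\ c != v.
Proof. by case: Hlm => _ /(_ v c) H /H [/andP[/eqP -> ->]]. Qed.

Lemma c1R_some R v c : c1R R v = Some c -> c1 v = Some c /\ c \in R.
Proof. by rewrite /Defs.c1R; case: (c1 v) => // c'; case: ifP => // H [<-]. Qed.

Lemma lfollow_in R f w : w \in R -> lfollow R f w \in R.
Proof.
elim: f w => //= f IH w wR; case E: (c1R R w) => [c|] //.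
by apply: IH; case: (c1R_some E).
Qed.

Lemma lfollow_chain R f w z : anc w z -> z != w -> anc z (lfollow R f w) ->
  c1 (parent z) = Some z.
Proof.
elim: f w => [|f IH] w /= wz zw; first by move=> zw'; move: zw; rewrite (anc_antisym Htree zw' wz) eqxx.
case E: (c1R R w) => [c|]; last first.
  by move=> zw'; move: zw; rewrite (anc_antisym Htree zw' wz) eqxx.
have [Ec cR] := c1R_some E; have [pc cw] := c1_child Ec.
move=> zl.
have cl : anc c (lfollow R f c).
  clear -Htree Hlm; elim: f c => [|f IH] c /=; first exact: anc_refl.
  case E: (c1R R c) => [d|]; last exact: anc_refl.
  have [Ed _] := c1R_some E; have [pd _] := c1_child Ed.
  by apply: anc_trans (IH d); rewrite -pd anc_parent.
case/orP: (anc_total zl cl) => [zc|cz].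
  case: (eqVneq z c) => [->|zc']; first by rewrite pc.
  have wz' : anc w z := wz.
  have := anc_parentr zc zc'; rewrite pc => zw'.
  by move: zw; rewrite (anc_antisym Htree zw' wz) eqxx.
case: (eqVneq z c) => [->|zc']; first by rewrite pc.
exact: IH cz zc' zl.
Qed.

Lemma lfollow_anc R f w : anc w (lfollow R f w).
Proof.
elim: f w => [|f IH] w /=; first exact: anc_refl.
case E: (c1R R w) => [d|]; last exact: anc_refl.
have [Ed _] := c1R_some E; have [pd _] := c1_child Ed.
by apply: anc_trans (IH d); rewrite -pd anc_parent.
Qed.

Lemma bfind_spec R m f w b : w \in R -> bfind R m f w = Some b ->
  [/\ b \in R, anc w b, balanced R m b,
      (forall z, anc w z -> z != w -> anc z b -> c1 (parent z) = Some z) &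
      (b != w -> [/\ c1R R (parent b) = Some b, ~~ balanced R m (parent b) &
                     parent b \in R])].
Proof.
elim: f w => [|f IH] w wR //=.
case: ifP => bal.
  move=> [<-]; split => //; first exact: anc_refl.
    by move=> z wz zw zw'; move: zw; rewrite (anc_antisym Htree zw' wz) eqxx.
  by rewrite eqxx.
case E: (c1R R w) => [c|] // Hb.
have [Ec cR] := c1R_some E; have [pc cw] := c1_child Ec.
have [bR cb balb chain pred] := IH _ cR Hb.
have wb : anc w b by apply: anc_trans cb; rewrite -pc anc_parent.
split => //.
  move=> z wz zw zb; case/orP: (anc_total zb cb) => [zc|cz].
    case: (eqVneq z c) => [->|zc']; first by rewrite pc.
    have := anc_parentr zc zc'; rewrite pc => zw'.
    by move: zw; rewrite (anc_antisym Htree zw' wz) eqxx.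
  case: (eqVneq z c) => [->|zc']; first by rewrite pc.
  exact: chain cz zc' zb.
move=> bw; case: (eqVneq b c) => [bc|bc]; last exact: pred.
by subst b; rewrite pc E bal.
Qed.

Lemma bfind_none R m f w : w \in R -> #|V| < f + dep w -> bfind R m f w = None ->
  k * #|R| < m.
Proof.
elim: f w => [|f IH] w wR /=.
  by rewrite add0n ltnNge dep_le.
move=> Hf; case: ifP => // bal.
case E: (c1R R w) => [c|].
  have [Ec cR] := c1R_some E; have [pc cw] := c1_child Ec.
  have dl : dep w < dep c.
    by have := dep_lt Htree (anc_parent parent c); rewrite pc; apply; rewrite eq_sym.
  by move=> Hb; apply: (IH c) => //; apply: (leq_trans Hf); rewrite addSn -addnS leq_add2l.
move: bal; rewrite /Defs.balanced /Defs.sizeL E muln0 add0n => /negbT.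
by rewrite -ltnNge.
Qed.

Lemma CV_S0 m f R : CV m f.+1 R =
  match (if rt R is Some x then bfind R m #|V|.+1 x else None) with
  | None => set0
  | Some b => b |: \bigcup_(w in R | child b w) CV m f (sub R w)
  end.
Proof. by []. Qed.

Lemma CV_sub m f R : CV m f R \subset R.
Proof.
elim: f R => [|f IH] R; first exact: sub0set.
rewrite CV_S0; case Er: (rt R) => [x|]; last exact: sub0set.
have xR : x \in R by move: Er; rewrite /Defs.rt; case: pickP => // y /andP[yR _] [<-].
case E: (bfind R m #|V|.+1 x) => [b|]; last exact: sub0set.
have [bR _ _ _ _] := bfind_spec xR E.
rewrite subUset sub1set bR /=; apply/bigcupsP => w _.
apply: subset_trans (IH _) _; exact: subsetIl.
Qed.

Lemma CV_S m f R q : conv R q -> CV m f.+1 R =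
  match bfind R m #|V|.+1 q with
  | None => set0
  | Some b => b |: \bigcup_(w in R | child b w) CV m f (sub R w)
  end.
Proof. by move=> cR; rewrite CV_S0 (conv_rt cR). Qed.


Lemma CV_noanc m f R q p z : conv R q -> p \in R -> p \notin CV m f R -> z \in R ->
  parent z = p -> z != p -> c1 p != Some z -> forall y, y \in CV m f R -> ~~ anc z y.
Proof.
elim: f R q p z => [|f IH] R q p z cR pR pCV zR pz zp c1p y; first by rewrite inE.
have [qR qa qc] := cR.
rewrite (CV_S _ _ cR) in pCV *.
case E: (bfind R m #|V|.+1 q) => [b|]; last by rewrite inE.
rewrite E in pCV.
have [bR qb _ chain _] := bfind_spec qR E.
have qz : anc q z by apply: qa.
have zq : z != q.
  apply/negP => /eqP zq; subst z.
  by move: zp; rewrite -(anc_antisym Htree (qa _ pR)) -?pz ?anc_parent ?eqxx.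
rewrite in_setU1 => /orP[/eqP ->|/bigcupP[w /andP[wR /andP[/eqP bw wb]] yw]].
  by apply/negP => zb; move: c1p; rewrite -pz chain ?eqxx.
have yS : y \in sub R w by apply: (subsetP (CV_sub _ _ _)) yw.
have wy : anc w y by move: yS; rewrite !inE => /andP[].
apply/negP => zy.
case: (eqVneq z w) => [zw|zw].
  by subst z; move: pCV; rewrite -pz bw in_setU1 eqxx.
case/orP: (anc_total zy wy) => [zw'|wz].
  have zb : anc z b by rewrite -bw; apply: anc_parentr.
  by move: c1p; rewrite -pz chain ?eqxx.
have := IH (sub R w) w p z (conv_sub cR wR).
have pS : p \in sub R w by rewrite !inE pR -pz; apply: anc_parentr => //; rewrite eq_sym.
have zS : z \in sub R w by rewrite !inE zR wz.
have pCV' : p \notin CV m f (sub R w).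
  apply: contra pCV => pC; rewrite in_setU1; apply/orP; right.
  by apply/bigcupP; exists w => //; rewrite wR /Defs.child bw eqxx wb.
by move=> /(_ pS pCV' zS pz zp c1p y yw); rewrite zy.
Qed.

Lemma CV_comp m f R q x : conv R q -> #|R| < f -> x \in R -> x \notin CV m f R ->
  k * #|comp (R :\: CV m f R) x| < m.
Proof.
elim: f R q x => [|f IH] R q x cR Rf xR xCV; first by rewrite ltn0 in Rf.
have [qR qa qc] := cR.
rewrite (CV_S _ _ cR) in xCV *.
case E: (bfind R m #|V|.+1 q) => [b|]; last first.
  have := bfind_none qR _ E; rewrite ltnS leq_addr => /(_ isT) kR.
  apply: leq_ltn_trans kR; rewrite leq_mul2l; apply/orP; right.
  apply: subset_leq_card; apply/subsetP => y yc.
  have : x \in R :\: set0 by rewrite !inE xR.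
  by move/comp_sub/(_ yc); rewrite !inE => /andP[].
rewrite E in xCV.
have [bR qb _ chain pred] := bfind_spec qR E.
set CVs := b |: _ in xCV *.
have bCV : b \in CVs by rewrite /CVs in_setU1 eqxx.
have xb : x != b by apply: contra xCV => /eqP ->.
have xA : x \in R :\: CVs by rewrite in_setD xCV xR.
case: (boolP [exists w, [&& w \in R, child b w & anc w x]]).
  case/existsP => w /and3P[wR /andP[/eqP bw wb] wx].
  have cB := conv_sub cR wR.
  have BR : #|sub R w| < f.
    have : #|sub R w| < #|R|.
      apply: proper_card; apply/properP; split; first exact: subsetIl.
      exists b => //; rewrite !inE bR /=; apply/negP => wb'.
      by move: wb; rewrite (anc_antisym Htree wb') -?bw ?anc_parent ?eqxx.
    by move=> H; apply: leq_trans H _; rewrite -ltnS.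
  have xB : x \in sub R w by rewrite !inE xR wx.
  have CVB : CV m f (sub R w) \subset CVs.
    apply/subsetP => y yC; rewrite /CVs in_setU1; apply/orP; right.
    by apply/bigcupP; exists w => //; rewrite wR /Defs.child bw eqxx wb.
  have xCVB : x \notin CV m f (sub R w) by apply: contra xCV; apply: (subsetP CVB).
  have := IH _ _ _ cB BR xB xCVB; apply: leq_ltn_trans; rewrite leq_mul2l; apply/orP; right.
  apply: subset_leq_card; apply/subsetP => y; rewrite !inE => xy.
  have clw : forall a c, a \in sub R w -> c \in R :\: CVs -> adjT a c -> c \in sub R w.
    move=> a c aS; rewrite in_setD => /andP[cCV cR']; move: aS.
    rewrite !inE => /andP[aR wa] /orP[] /andP[/eqP pc ca].
      by rewrite cR' (anc_trans wa) // -pc anc_parent.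
    rewrite cR' /=; case: (eqVneq a w) => [aw|aw].
      by move: cCV; rewrite -pc aw bw bCV.
    by rewrite -pc; apply: anc_parentr => //; rewrite eq_sym.
  have [cy _] := connect_restrict xB clw xy.
  apply: connect_mono cy; apply/subsetP => z.
  rewrite in_setI !in_setD => /andP[/andP[zCV zR] zB]; rewrite zB andbT.
  by apply: contra zCV; apply: (subsetP CVB).
rewrite negb_exists => /forallP nw.
have bx : ~~ anc b x.
  apply/negP => bx.
  have [c [pc cb cx]] : exists c, [/\ parent c = b, c != b & anc c x].
    by apply: anc_child bx _; rewrite eq_sym.
  have cR' : c \in R by apply: qc xR _ cx; apply: anc_trans qb _; rewrite -pc anc_parent.
  by move: (nw c); rewrite cR' cx /Defs.child pc eqxx cb.
have bq : b != q by apply: contra bx => /eqP ->; apply: qa.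
have [c1b nbal pbR] := pred bq.
have cl : forall a c, a \in R :\: sub R b -> c \in R :\: CVs -> adjT a c ->
    c \in R :\: sub R b.
  move=> a c aS; rewrite in_setD => /andP[cCV cR']; move: aS.
  rewrite !inE => /andP[/nandP ab aR].
  rewrite cR' /= andbT.
  have ab' : ~~ anc b a by case: ab => [/negP|]//; rewrite aR.
  case/orP => /andP[/eqP pc ca]; apply/negP => bc.
    case: (eqVneq c b) => [cb|cb]; first by move: cCV; rewrite cb bCV.
    by move: ab'; rewrite -pc (anc_parentr bc) // eq_sym.
  by move: ab'; rewrite (anc_trans bc) // -pc anc_parent.
have xB : x \in R :\: sub R b by rewrite !inE xR bx.
have HB : k * #|R :\: sub R b| < m.
  rewrite cardsD (setIidPr (subsetIl _ _)) mulnBr.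
  move: nbal; rewrite /Defs.balanced /Defs.sizeL c1b -ltnNge => H.
  by rewrite ltn_subLR ?leq_mul2l ?subset_leq_card ?subsetIl ?orbT // addnC.
apply: leq_ltn_trans HB; rewrite leq_mul2l; apply/orP; right.
by apply: subset_leq_card; apply/subsetP => y; apply: comp_in_closed xB cl.
Qed.

Lemma conv_canonical R : canonical R -> exists q, conv R q.
Proof.
case=> [|R' x _ xA]; first by exists r; exact: conv_setT.
have [q Tq] := isTop_exists xA; exists q; exact: conv_comp xA Tq.
Qed.

Lemma C_sub R : CC R \subset R.
Proof.
rewrite /Defs.C; case: ifP => _ //; rewrite subUset CV_sub /=.
case Er: (rt R) => [x|]; last exact: sub0set.
have xR : x \in R by move: Er; rewrite /Defs.rt; case: pickP => // y /andP[yR _] [<-].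
by rewrite subUset !sub1set xR lfollow_in.
Qed.


Lemma Ceq R q : conv R q -> 2 * k + 2 < #|R| ->
  CC R = CV #|R| #|V|.+1 R :|: [set q; lR R q].
Proof. by move=> cR big; rewrite /Defs.C leqNgt big /= (conv_rt cR). Qed.

Lemma Csmall R : #|R| <= 2 * k + 2 -> CC R = R.
Proof. by move=> H; rewrite /Defs.C H. Qed.

Lemma C_noanc R q p z : conv R q -> 2 * k + 2 < #|R| -> p \in R -> p \notin CC R ->
  z \in R -> parent z = p -> z != p -> c1 p != Some z -> forall y, y \in CC R -> ~~ anc z y.
Proof.
move=> cR big pR pC zR pz zp c1p y; have [qR qa qc] := cR.
have qz : anc q z by apply: qa.
have zq : z != q.
  apply/negP => /eqP zq; subst z.
  by move: zp; rewrite -(anc_antisym Htree (qa _ pR)) -?pz ?anc_parent ?eqxx.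
rewrite (Ceq cR big) in pC *.
rewrite in_setU => /orP[yCV|]; last rewrite !inE => /orP[] /eqP ->.
- apply: (CV_noanc cR pR _ zR pz zp c1p yCV).
  by apply: contra pC; rewrite in_setU => ->.
- by apply/negP => zq'; move: zq; rewrite (anc_antisym Htree zq' qz) eqxx.
- by apply/negP => zl; move: c1p; rewrite -pz (lfollow_chain qz zq zl) eqxx.
Qed.

Lemma lfollow_to Q q a b f w : conv Q q -> a \in Q -> parent b = a -> b \notin Q ->
  (forall z, anc q z -> z != q -> anc z b -> c1 (parent z) = Some z) ->
  anc q w -> anc w a -> dep a - dep w <= f -> lfollow Q f w = a.
Proof.
move=> cQ aQ pb bQ H; have [qQ qa qc] := cQ.
have ab : anc a b by rewrite -pb anc_parent.
have bq : b != q by apply: contra bQ => /eqP ->.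
elim: f w => [|f IH] w qw wa /=.
  rewrite leqn0 subn_eq0 => Hd; case: (eqVneq w a) => // wa'.
  by have := dep_lt Htree wa wa'; rewrite ltnNge Hd.
have wQ : w \in Q := qc _ _ aQ qw wa.
case: (eqVneq w a) => [->|wa'] => Hd.
  have c1a : c1 a = Some b.
    by rewrite -pb; apply: H; [apply: anc_trans (qa _ aQ) ab | exact: bq | exact: anc_refl].
  by rewrite /Defs.c1R c1a (negbTE bQ).
have [c [pc cw ca]] := anc_child wa wa'.
have qc' : anc q c by apply: anc_trans qw _; rewrite -pc anc_parent.
have cq : c != q.
  apply/negP => /eqP cq; subst c.
  by move: cw; rewrite -(anc_antisym Htree qw) -?pc ?anc_parent ?eqxx.
have c1w : c1 w = Some c.
  by rewrite -pc; apply: H; [exact: qc' | exact: cq | apply: anc_trans ca ab].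
have cQ' : c \in Q := qc _ _ aQ qc' ca.
rewrite /Defs.c1R c1w cQ'; apply: IH => //.
have := dep_lt Htree (anc_parent parent c); rewrite pc eq_sym => /(_ cw) dl.
exact: arith1 Hd dl.
Qed.


Lemma boundary Q a b : canonical Q -> a \in Q -> adjT a b -> b \notin Q -> a \in CC Q.
Proof.
move=> HQ; elim: HQ a b => [|R x HR IH xA] a b aQ ab bQ; first by rewrite inE in bQ.
set A := R :\: CC R in xA aQ bQ *.
have aA : a \in A by apply: comp_sub xA aQ.
have [aC aR] : a \notin CC R /\ a \in R by move: aA; rewrite in_setD => /andP[].
have bR : b \in R by apply: contraT => bR; move: aC; rewrite (IH a b aR ab bR).
have bC : b \in CC R.
  apply: contraT => bC; have : b \in comp A x.
    rewrite inE; apply: connect_trans (_ : connect (restr A) x a) _; first by rewrite -inE.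
    by apply: connect1; rewrite /Defs.restr aA ab !in_setD bC bR.
  by rewrite (negbTE bQ).
have big : 2 * k + 2 < #|R|.
  by rewrite ltnNge; apply/negP => /Csmall HC; move: aC; rewrite HC aR.
have [q Tq] := isTop_exists xA.
have cQ := conv_comp xA Tq; have [qQ qa qc] := cQ.
have [qR cR] := conv_canonical HR.
case: (leqP #|comp A x| (2 * k + 2)) => [/Csmall -> //|bigQ].
rewrite (Ceq cQ bigQ) in_setU; apply/orP; right.
case/orP: ab => /andP[/eqP pc ca].
  (* b is a child of a *)
  rewrite !inE; apply/orP; right; apply/eqP; symmetry.
  have H : forall z, anc q z -> z != q -> anc z b -> c1 (parent z) = Some z.
    move=> z qz zq zb.
    have zQ : z = b \/ z \in comp A x.
      case: (eqVneq z b) => [->|zb']; [by left | right].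
      have := qc a z aQ qz; apply; rewrite -pc; apply: anc_parentr => //; rewrite eq_sym.
    have pQ : parent z \in comp A x.
      case: zQ => [->|zQ]; first by rewrite pc.
      by have [] := conv_parent cQ zQ zq.
    have pA : parent z \in A := comp_sub xA pQ.
    have zR : z \in R by case: zQ => [->//|/(comp_sub xA)]; rewrite in_setD => /andP[].
    have zp : z != parent z.
      case: zQ => [->|zQ]; first by rewrite pc.
      by have [_] := conv_parent cQ zQ zq; rewrite eq_sym.
    move: pA; rewrite in_setD => /andP[pC pR].
    case E: (c1 (parent z) == Some z); first exact/eqP.
    have := C_noanc cR big pR pC zR erefl zp (negbT E) bC.
    by rewrite zb.
  apply: (lfollow_to cQ aQ pc bQ H (anc_refl _ q) (qa _ aQ)).
  exact: leq_trans (leq_subr _ _) (dep_le parent a).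
(* a is a child of b *)
rewrite !inE; apply/orP; left; apply/eqP.
apply: (conv_top_unique cQ aQ); rewrite pc; exact: bQ.
Qed.

Lemma halving R x : canonical R -> x \in R :\: CC R ->
  2 * #|comp (R :\: CC R) x| <= #|R|.
Proof.
move=> HR xA; have [q cR] := conv_canonical HR.
have [xC xR] : x \notin CC R /\ x \in R by move: xA; rewrite in_setD => /andP[].
case: (leqP #|R| (2 * k + 2)) => [/Csmall HC|big]; first by move: xC; rewrite HC xR.
have xCV : x \notin CV #|R| #|V|.+1 R.
  by apply: contra xC; rewrite (Ceq cR big) in_setU => ->.
have HRV : #|R| < #|V|.+1 by rewrite ltnS max_card.
have := CV_comp cR HRV xR xCV.
have sub : #|comp (R :\: CC R) x| <= #|comp (R :\: CV #|R| #|V|.+1 R) x|.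
  apply: subset_leq_card; apply: comp_mono; apply: setDS.
  by rewrite (Ceq cR big) subsetUl.
by move=> kb; apply: arith2 Hk sub kb.
Qed.


Fixpoint ch u i : {set V} :=
  match i with
  | 0 => setT
  | i'.+1 => let R := ch u i' in if u \in CC R then R else comp (R :\: CC R) u
  end.

Definition home u := ch u #|V|.

Lemma ch_in u i : u \in ch u i.
Proof. by elim: i => [|i IH] /=; [rewrite inE | case: ifP => _ //; exact: comp_self]. Qed.

Lemma ch_can u i : canonical (ch u i).
Proof.
elim: i => [|i IH] /=; first exact: canT.
case: ifP => // uC; apply: canC => //; by rewrite in_setD uC ch_in.
Qed.

Lemma ch_sub u i : ch u i.+1 \subset ch u i.
Proof.
rewrite /=; case: ifP => // uC; apply/subsetP => y.
have uA : u \in ch u i :\: CC (ch u i) by rewrite in_setD uC ch_in.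
by move/(comp_sub uA); rewrite in_setD => /andP[].
Qed.

Lemma ch_mono u i j : i <= j -> ch u j \subset ch u i.
Proof.
move/subnK <-; elim: (j - i) => [|d IH]; first by rewrite add0n.
by rewrite addSn; apply: subset_trans (ch_sub _ _) IH.
Qed.

Lemma ch_fix u i : ch u i.+1 = ch u i -> forall j, i <= j -> ch u j = ch u i.
Proof.
move=> Hi j /subnK <-; elim: (j - i) => [|d IH]; first by rewrite add0n.
rewrite addSn; transitivity (ch u i.+1); last exact: Hi.
by rewrite /= IH.
Qed.

Lemma ch_stable u : exists2 i, i < #|V| & ch u i.+1 = ch u i.
Proof.
have H : forall i, (exists2 j, j < i & ch u j.+1 = ch u j) \/ #|ch u i| + i <= #|V|.
  elim=> [|i [[j ji Hj]|IH]]; first by right; rewrite addn0 max_card.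
    by left; exists j => //; apply: ltnW.
  case: (eqVneq (ch u i.+1) (ch u i)) => [E|E]; first by left; exists i.
  right; apply: leq_trans IH; rewrite addnS ltn_add2r; apply: proper_card.
  by rewrite properEneq E ch_sub.
case: (H #|V|) => // Hc.
have : 0 < #|ch u #|V| | by apply/card_gt0P; exists u; exact: ch_in.
have : #|ch u #|V| | <= 0 by rewrite -(leq_add2r #|V|) add0n.
by rewrite leqn0 => /eqP ->.
Qed.

Lemma ch_stable_ge u j : #|V| <= j -> ch u j = home u.
Proof.
have [i iV Hi] := ch_stable u.
by move=> Vj; rewrite (ch_fix Hi (leq_trans (ltnW iV) Vj)) /home (ch_fix Hi (ltnW iV)).
Qed.

Lemma home_can u : canonical (home u).
Proof. exact: ch_can. Qed.

Lemma can_nonempty_C R u : canonical R -> u \in R -> exists2 y, y \in CC R & y \in R.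
Proof.
move=> HR uR; have [q cR] := conv_canonical HR; have [qR _ _] := cR.
case: (leqP #|R| (2 * k + 2)) => [/Csmall ->|big]; first by exists u.
by exists q => //; rewrite (Ceq cR big) !inE eqxx orbT.
Qed.

Lemma home_C u : u \in CC (home u).
Proof.
have := ch_stable_ge u (leqnSn _); rewrite /home /=.
case: ifP => // uC E.
have [y yC yR] := can_nonempty_C (ch_can u #|V|) (ch_in u #|V|).
have : y \in comp (ch u #|V| :\: CC (ch u #|V|)) u by rewrite E.
have uA : u \in ch u #|V| :\: CC (ch u #|V|) by rewrite in_setD uC ch_in.
by move/(comp_sub uA); rewrite in_setD yC.
Qed.

Lemma ch_of_can Q u : canonical Q -> u \in Q -> exists i, Q = ch u i.
Proof.
move=> HQ; elim: HQ u => [|R x HR IH xA] u uQ; first by exists 0.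
have uA : u \in R :\: CC R by apply: comp_sub xA uQ.
have [uC uR] : u \notin CC R /\ u \in R by move: uA; rewrite in_setD => /andP[].
have [i Ei] := IH u uR; exists i.+1; rewrite /= -Ei (negbTE uC).
by rewrite (comp_eq uQ).
Qed.

Lemma home_unique Q u : canonical Q -> u \in CC Q -> Q = home u.
Proof.
move=> HQ uC; have uQ : u \in Q := subsetP (C_sub Q) _ uC.
have [i Ei] := ch_of_can HQ uQ.
have fix1 : ch u i.+1 = ch u i by rewrite /= -Ei uC.
case: (leqP i #|V|) => iV; first by rewrite /home (ch_fix fix1 iV) Ei.
by rewrite Ei ch_stable_ge // ltnW.
Qed.

Lemma home_min Q u : canonical Q -> u \in Q -> home u \subset Q.
Proof.
move=> HQ uQ; have [i ->] := ch_of_can HQ uQ.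
case: (leqP i #|V|) => iV; first exact: ch_mono.
by rewrite ch_stable_ge // ltnW.
Qed.

Lemma ch_halving u i : ch u i.+1 != ch u i ->
  [/\ u \notin CC (ch u i), ch u i.+1 = comp (ch u i :\: CC (ch u i)) u &
      2 * #|ch u i.+1| <= #|ch u i|].
Proof.
rewrite /=; case: ifP => [_|uC _]; first by rewrite eqxx.
split => //; apply: halving; first exact: ch_can.
by rewrite in_setD uC ch_in.
Qed.

Definition jstar u v := \max_(j < #|V|.+1 | v \in ch u j) (j : nat).
Definition Nset u v := ch u (jstar u v).

Lemma Nset_can u v : canonical (Nset u v).
Proof. exact: ch_can. Qed.

Lemma Nset_u u v : u \in Nset u v.
Proof. exact: ch_in. Qed.

Lemma Nset_v u v : v \in Nset u v.
Proof.
rewrite /Nset /jstar.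
have P0 : 0 < #|[pred j : 'I_#|V|.+1 | v \in ch u j]|.
  by apply/card_gt0P; exists ord0; rewrite inE /= inE.
by have [i0 /= Hi0 ->] := eq_bigmax_cond (fun j : 'I_#|V|.+1 => (j : nat)) P0.
Qed.

Lemma Nset_min Q u v : canonical Q -> u \in Q -> v \in Q -> Nset u v \subset Q.
Proof.
move=> HQ uQ vQ; have [i Ei] := ch_of_can HQ uQ.
have [j [ji jV vj]] : exists j, [/\ ch u j = Q, j <= #|V| & v \in ch u j].
  case: (leqP i #|V|) => iV; first by exists i; rewrite -Ei.
  have E2 : ch u i = home u := ch_stable_ge u (ltnW iV).
  have vi : v \in ch u i by rewrite -Ei.
  exists #|V|; split; [by rewrite Ei E2 | by [] | by move: vi; rewrite E2].
rewrite -ji; apply: ch_mono.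
by apply: (@leq_bigmax_cond _ (fun j : 'I_#|V|.+1 => v \in ch u j) (fun j => (j : nat)) (Ordinal (jV : j < #|V|.+1))).
Qed.

Lemma home_sub_N u v : home u \subset Nset u v.
Proof. exact: home_min (Nset_can u v) (Nset_u u v). Qed.


Lemma lca_ex u v : exists l, [/\ anc l u, anc l v & forall w, anc w u -> anc w v -> anc w l].
Proof.
have P0 : anc r u && anc r v by rewrite !anc_root.
case: (@arg_maxnP _ r (fun w => anc w u && anc w v) dep P0) => l /andP[lu lv] Hmax.
exists l; split => // w wu wv.
case/orP: (anc_total wu lu) => // lw.
case: (eqVneq l w) => [->|lw']; first exact: anc_refl.
have H : dep w <= dep l by apply: Hmax; rewrite /= wu wv.
by move: H; rewrite leqNgt (dep_lt Htree lw lw').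
Qed.

Definition onP u v z := (anc z u || anc z v) && [forall w, (anc w u && anc w v) ==> anc w z].

Lemma onPP u v z : reflect ((anc z u \/ anc z v) /\ forall w, anc w u -> anc w v -> anc w z)
  (onP u v z).
Proof.
apply: (iffP andP) => [[/orP H /forallP H2]|[H H2]]; split => //.
- by move=> w wu wv; move: (H2 w); rewrite wu wv.
- by apply/orP.
- by apply/forallP => w; apply/implyP => /andP[]; apply: H2.
Qed.

Lemma onP_self u v : onP u v u.
Proof. by apply/onPP; split; [left; exact: anc_refl | move=> w]. Qed.

Lemma onP_conv Q q u v z : conv Q q -> u \in Q -> v \in Q -> onP u v z -> z \in Q.
Proof.
case=> qQ qa qc uQ vQ /onPP[[zu|zv] H].
  by apply: qc uQ (H _ (qa _ uQ) (qa _ vQ)) zu.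
by apply: qc vQ (H _ (qa _ uQ) (qa _ vQ)) zv.
Qed.

Lemma onP_connect A u v : (forall z, onP u v z -> z \in A) -> connect (restr A) u v.
Proof.
move=> H; have [l [lu lv Hl]] := lca_ex u v.
apply: connect_trans (_ : connect (restr A) u l) _.
  apply: upwalk lu _ => w lw wu; apply: H; apply/onPP; split; first by left.
  by move=> w' w'u w'v; apply: anc_trans (Hl _ w'u w'v) lw.
rewrite (sym_connect_sym (restr_sym A)).
apply: upwalk lv _ => w lw wv; apply: H; apply/onPP; split; first by right.
by move=> w' w'u w'v; apply: anc_trans (Hl _ w'u w'v) lw.
Qed.

Lemma up_exit (B : {set V}) a x : x \in B -> anc a x -> a \notin B ->
  exists z, [/\ anc a z, anc z x, z \in B & parent z \notin B].
Proof.
move=> xB /(ancP parent)[i]; elim: i x xB => [|i IH] x xB; first by move=> /= <-; rewrite xB.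
rewrite iterSr => Hi aB.
case: (boolP (parent x \in B)) => pB.
  have [z [az zp zB pzB]] := IH _ pB Hi aB.
  by exists z; split => //; apply: anc_trans zp (anc_parent _ _).
by exists x; split => //; [apply/ancP; exists i.+1; rewrite iterSr | exact: anc_refl].
Qed.

Lemma path_exit Q u v : u \in Q -> v \notin Q ->
  exists a b, [/\ a \in Q, b \notin Q, adjT a b, onP u v a & onP u v b].
Proof.
move=> uQ vQ; have [l [lu lv Hl]] := lca_ex u v.
have onl : forall z, anc l z -> (anc z u \/ anc z v) -> onP u v z.
  by move=> z lz H; apply/onPP; split => // w wu wv; apply: anc_trans (Hl _ wu wv) lz.
case: (boolP (l \in Q)) => lQ.
  have vQc : v \in ~: Q by rewrite inE.
  have lQc : l \notin ~: Q by rewrite inE lQ.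
  have [z [lz zv zQ pzQ]] := up_exit vQc lv lQc.
  move: zQ pzQ; rewrite !inE negbK => zQ pzQ.
  have zl : z != l by apply: contra zQ => /eqP ->.
  exists (parent z), z; split => //.
  - rewrite /Defs.adjT /Defs.child eqxx /=; apply/orP; left.
    by apply/eqP => e; move: zQ; rewrite [X in X \in Q]e pzQ.
  - apply: onl; [apply: anc_parentr lz _; rewrite eq_sym // | right; apply: anc_trans zv; exact: anc_parent].
  - by apply: onl; [exact: lz | right].
have [z [lz zu zQ pzQ]] := up_exit uQ lu lQ.
have zl : z != l by apply: contra lQ => /eqP <-.
exists z, (parent z); split => //.
- rewrite /Defs.adjT /Defs.child eqxx /=; apply/orP; right.
  by apply/eqP => e; move: pzQ; rewrite -e zQ.
- by apply: onl; [exact: lz | left].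
- apply: onl; [apply: anc_parentr lz _; rewrite eq_sym // | left; apply: anc_trans zu; exact: anc_parent].
Qed.

Lemma deepest_ex (D : {set V}) w x0 : x0 \in D -> (forall z, z \in D -> anc z w) ->
  exists x, deepest parent D x.
Proof.
move=> x0D Dw; case: (@arg_maxnP _ x0 (fun z => z \in D) dep x0D) => x xD Hx; exists x; split => // z zD.
case/orP: (anc_total (Dw _ zD) (Dw _ xD)) => // xz.
case: (eqVneq x z) => [->|xz']; first exact: anc_refl.
have H : dep z <= dep x by apply: Hx.
by move: H; rewrite leqNgt (dep_lt Htree xz xz').
Qed.

Lemma highest_ex (D : {set V}) w x0 : x0 \in D -> (forall z, z \in D -> anc z w) ->
  exists x, highest parent D x.
Proof.
move=> x0D Dw; case: (@arg_minnP _ x0 (fun z => z \in D) dep x0D) => x xD Hx; exists x; split => // z zD.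
case/orP: (anc_total (Dw _ zD) (Dw _ xD)) => // zx.
case: (eqVneq z x) => [->|zx']; first exact: anc_refl.
have H : dep x <= dep z by apply: Hx.
by move: H; rewrite leqNgt (dep_lt Htree zx zx').
Qed.


Local Notation adjG := (Defs.adjG parent c1 k).
Local Notation step := (Defs.step parent c1 k).

Definition normalS u v u' := [/\ exists2 z, z \in CC (home u) & adjT z u', onP u v u' &
  forall w, w \in CC (home u) -> ~~ onP u' v w].
Definition lcaS u v u' := [/\ u' \in CC (home u), anc u' v & ~~ anc u v].
Definition specialS u v u' := exists l y,
  ((forall w, anc w u -> anc w v -> anc w l) /\ anc l u /\ anc l v) /\
  (l \in CC (home u) /\ y \in CC (home u)) /\
  (parent y = u' /\ y != u' /\ anc y u) /\ (~~ anc u' v /\ ~~ anc u v /\ ~~ anc v u) /\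
  (forall w, anc l w -> w != l -> anc w u' -> w \notin CC (home u)).

Lemma classify u v u' c : step v u u' c ->
  c <= 2 /\ (u' = v \/ (~ adjG u v /\ (normalS u v u' \/ lcaS u v u' \/ specialS u v u'))).
Proof.
case=> uv [[adj [-> ->]]|[nadj [R [HR uC st]]]]; first by split => //; left.
have ES := home_unique HR uC; subst R.
set S := home u in uC st *.
have vC : v \notin CC S.
  by apply/negP => vC; apply: nadj; right; exists S; split => //; exact: home_can.
have c2 : forall x, c = (x != u) + 1 -> c <= 2 by move=> x ->; case: (x != u).
case: st => [[uv1 [x [[xX xD] [cx [u'v ce]]]]]|[[vu [nuv [x [[xX xH] [pu ce]]]]]|
  [nuv [nvu [[X0 [y [[yY yH] [pu ce]]]]|[Xn [x [[xX xD] [cx [u'v ce]]]]]]]]]];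
  split; try exact: c2 ce; right; split => //.
-
  move: xX; rewrite inE => /andP[xC xv].
  move: (cx) => /andP[/eqP pu' u'x].
  have xu' : anc x u' by rewrite -pu' anc_parent.
  left; split.
  + by exists x => //; rewrite /Defs.adjT cx.
  + apply/onPP; split; first by right.
    move=> w wu wv; apply: anc_trans wu (anc_trans _ xu'); apply: xD.
    by rewrite inE uC uv1.
  + move=> w wC; apply/negP => /onPP[wor H].
    have u'w := H u' (anc_refl _ _) u'v.
    have wv : anc w v by case: wor => // wu'; exact: anc_trans wu' u'v.
    have wx : anc w x by apply: xD; rewrite inE wC wv.
    by move: u'x; rewrite (anc_antisym Htree (anc_trans u'w wx) xu') eqxx.
-
  move: xX; rewrite inE => /andP[xC /andP[vx xu]].
  have xv : v != x by apply: contra vC => /eqP ->.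
  have xr : x != r.
    apply: contra xv => /eqP xr; apply/eqP; apply: (anc_antisym Htree vx).
    by rewrite xr; apply: anc_root.
  have px := anc_parent_ne Htree xr.
  subst u'; left; split.
  + exists x => //; rewrite /Defs.adjT /Defs.child eqxx /=; apply/orP; right.
    by rewrite eq_sym.
  + apply/onPP; split; first by left; apply: anc_trans (anc_parent _ _) xu.
    by move=> w wu wv; apply: anc_trans wv (anc_parentr vx xv).
  + move=> w wC; apply/negP => /onPP[wor H].
    have vw := H v (anc_parentr vx xv) (anc_refl _ _).
    case: wor => [wp|wv].
      have : anc x w by apply: xH; rewrite inE wC vw (anc_trans wp) // (anc_trans (anc_parent _ _) xu).
      move=> xw; move: px; rewrite (anc_antisym Htree (anc_parent _ _) (anc_trans xw wp)) eqxx.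
      by [].
    by move: vC; rewrite (anc_antisym Htree vw wv) wC.
-
  have [l [lu lv Hl]] := lca_ex u v.
  move: yY; rewrite inE => /and3P[yC yu nyv].
  have ly : anc l y.
    case/orP: (anc_total yu lu) => // yl; by move: nyv; rewrite (anc_trans yl lv).
  have yl : y != l by apply: contra nyv => /eqP ->.
  have lu' : anc l u' by rewrite pu; apply: anc_parentr ly _; rewrite eq_sym.
  have u'u : anc u' u by rewrite pu; apply: anc_trans (anc_parent _ _) yu.
  have yr : y != r by apply: contra nyv => /eqP ->; apply: anc_root.
  have yu' : y != u' by rewrite pu eq_sym (anc_parent_ne Htree yr).
  have K : forall w, anc l w -> w != l -> anc w u' -> w \notin CC S.
    move=> w lw wl wu'; apply/negP => wC.
    have wu := anc_trans wu' u'u.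
    have nwv : ~~ anc w v.
      apply/negP => wv; move: wl; rewrite (anc_antisym Htree (Hl _ wu wv) lw) eqxx.
      by [].
    have yw : anc y w by apply: yH; rewrite inE wC wu nwv.
    have : anc u' y by rewrite pu anc_parent.
    by move=> u'y; move: yu'; rewrite (anc_antisym Htree (anc_trans yw wu') u'y) eqxx.
  have X0' : forall w, w \in CC S -> anc w v -> anc w u.
    move=> w wC wv; apply: contraT => nwu.
    by have := in_set0 w; rewrite -X0 inE wC wv nwu.
  have adjyu' : adjT y u'.
    by rewrite /Defs.adjT /Defs.child -pu eqxx yu' orbT.
  case: (boolP (anc u' v)) => [u'v|nu'v].
    have u'l : u' = l by exact: (anc_antisym Htree (Hl _ u'u u'v) lu').
    case: (boolP (u' \in CC S)) => u'C; first by right; left; split.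
    left; split.
    * by exists y.
    * apply/onPP; split; first by right.
      by move=> w wu wv; rewrite u'l; apply: Hl.
    * move=> w wC; apply/negP => /onPP[wor H].
      have u'w := H u' (anc_refl _ _) u'v.
      case: wor => [wu'|wv].
        by move: u'C; rewrite -(anc_antisym Htree wu' u'w) wC.
      have := Hl _ (X0' _ wC wv) wv; rewrite -u'l => wu'.
      by move: u'C; rewrite -(anc_antisym Htree wu' u'w) wC.
  case: (boolP (l \in CC S)) => lC.
    right; right; exists l, y; split; first by split.
    by split; split => //; rewrite -pu.
  left; split.
  + by exists y.
  + apply/onPP; split; first by left.
    by move=> w wu wv; apply: anc_trans (Hl _ wu wv) lu'.
  + move=> w wC; apply/negP => /onPP[wor H].
    have lw := H l lu' lv.
    have wl : w != l by apply: contra lC => /eqP <-.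
    case: wor => [wu'|wv]; first by move: (K _ lw wl wu'); rewrite wC.
    have := Hl _ (X0' _ wC wv) wv => wl'.
    by move: wl; rewrite (anc_antisym Htree wl' lw) eqxx.
-
  move: xX; rewrite inE => /and3P[xC xv nxu].
  move: (cx) => /andP[/eqP pu' u'x].
  have xu' : anc x u' by rewrite -pu' anc_parent.
  have nu'u : ~~ anc u' u by apply: contra nxu; apply: anc_trans xu'.
  left; split.
  + by exists x => //; rewrite /Defs.adjT cx.
  + apply/onPP; split; first by right.
    move=> w wu wv; case/orP: (anc_total wv xv) => [wx|xw]; first exact: anc_trans wx xu'.
    by move: nxu; rewrite (anc_trans xw wu).
  + move=> w wC; apply/negP => /onPP[wor H].
    have u'w := H u' (anc_refl _ _) u'v.
    have wv : anc w v by case: wor => // wu'; exact: anc_trans wu' u'v.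
    have nwu : ~~ anc w u by apply: contra nu'u; apply: anc_trans u'w.
    have wx : anc w x by apply: xD; rewrite inE wC wv nwu.
    by move: u'x; rewrite (anc_antisym Htree (anc_trans u'w wx) xu') eqxx.
Qed.


Local Notation reach := (Defs.reach parent c1 k).
Local Notation run := (Defs.run parent c1 k).

Definition L (X : {set V}) := trunc_log 2 #|X|.
Definition Psi u v := 2 * ((L (Nset u v) - L (home u)) + L (Nset u v)) + ~~ anc u v.

Lemma L_mono (X Y : {set V}) : X \subset Y -> L X <= L Y.
Proof. by move=> XY; apply: leq_trunc_log; apply: subset_leq_card. Qed.

Lemma L_half (X Y : {set V}) : 0 < #|X| -> 2 * #|X| <= #|Y| -> L X < L Y.
Proof.
move=> X0 XY; rewrite /L -trunc_log2_double //.
by apply: leq_trunc_log; rewrite -mul2n.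
Qed.

Lemma find_step (P : nat -> bool) n : P 0 -> ~~ P n -> exists j, [/\ j < n, P j & ~~ P j.+1].
Proof.
elim: n => [|n IH] P0 Pn; first by rewrite P0 in Pn.
case: (boolP (P n)) => Pn'; first by exists n.
by have [j [jn Pj Pj1]] := IH P0 Pn'; exists j; split => //; apply: ltnW.
Qed.

Lemma u_home u : u \in home u.
Proof. exact: ch_in. Qed.

Lemma normal_dec u v u' : normalS u v u' -> u' != v -> Psi u' v < Psi u v.
Proof.
case=> [[z zC zu'] onu' noC] u'v.
set S := home u in zC noC *.
have cS : canonical S := home_can u.
have [qS convS] := conv_canonical cS.
have uS : u \in S := u_home u.
have zS : z \in S := subsetP (C_sub S) z zC.
case: (boolP (v \in S)) => vS.
  have NS : Nset u v = S.
    by apply/eqP; rewrite eqEsubset Nset_min // home_sub_N.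
  have u'S : u' \in S := onP_conv convS uS vS onu'.
  have u'C : u' \notin CC S by apply/negP => H; move: (noC _ H); rewrite onP_self.
  set A := S :\: CC S.
  have u'A : u' \in A by rewrite in_setD u'C u'S.
  have cv : connect (restr A) u' v.
    apply: onP_connect => w hw; rewrite in_setD (onP_conv convS u'S vS hw) andbT.
    by apply/negP => wC; move: (noC _ wC); rewrite hw.
  set Q := comp A u'.
  have cQ : canonical Q := canC cS u'A.
  have vQ : v \in Q by rewrite inE.
  have zQ : z \notin Q by apply/negP => /(comp_sub u'A); rewrite in_setD zC.
  have u'Q : u' \in Q := comp_self A u'.
  have u'CQ : u' \in CC Q by apply: boundary cQ u'Q _ zQ; rewrite adjT_sym.
  have hu' : home u' = Q := esym (home_unique cQ u'CQ).
  have Nu' : Nset u' v = Q.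
    by apply/eqP; rewrite eqEsubset Nset_min // -hu' home_sub_N.
  have half : 2 * #|Q| <= #|S| := halving cS u'A.
  have LQS : L Q < L S by apply: L_half half; apply/card_gt0P; exists u'.
  rewrite /Psi NS hu' Nu' !subnn !add0n; exact: arith3.
have u'S : u' \notin S.
  apply/negP => u'S; have [a [b [aS bS ab ona onb]]] := path_exit u'S vS.
  by have aC := boundary cS aS ab bS; move: (noC _ aC); rewrite ona.
set N := Nset u v.
have cN : canonical N := Nset_can u v.
have uN : u \in N := Nset_u u v.
have vN : v \in N := Nset_v u v.
have [qN convN] := conv_canonical cN.
have u'N : u' \in N := onP_conv convN uN vN onu'.
have [j [jV u'j u'j1]] : exists j, [/\ j < #|V|, u' \in ch u j & u' \notin ch u j.+1].
  by apply: (find_step (P := fun j => u' \in ch u j)); rewrite /= ?inE.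
have neq : ch u j.+1 != ch u j by apply/eqP => E; move: u'j1; rewrite E u'j.
have [uCj Ej1 halfj] := ch_halving neq.
have Sj1 : S \subset ch u j.+1 by apply: ch_mono.
have zj1 : z \in ch u j.+1 := subsetP Sj1 z zS.
have uA : u \in ch u j :\: CC (ch u j) by rewrite in_setD uCj ch_in.
have u'Cj : u' \in CC (ch u j).
  apply: contraT => nC; have : u' \in ch u j.+1; last by rewrite (negbTE u'j1).
  rewrite Ej1 inE.
  have zc : z \in comp (ch u j :\: CC (ch u j)) u by rewrite -Ej1.
  apply: connect_trans (_ : connect _ u z) _; first by rewrite -inE.
  apply: connect1; rewrite /Defs.restr (comp_sub uA zc) zu' in_setD nC u'j.
  by [].
have hu' : home u' = ch u j := esym (home_unique (ch_can u j) u'Cj).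
have Nu' : Nset u' v = N.
  apply/eqP; rewrite eqEsubset Nset_min //=.
  apply: Nset_min; [exact: Nset_can | | exact: Nset_v].
  by apply: (subsetP (home_sub_N u' v)); rewrite hu' ch_in.
have LSj : L S < L (ch u j).
  apply: L_half; first by apply/card_gt0P; exists u.
  by apply: leq_trans halfj; rewrite leq_mul2l subset_leq_card.
have LjN : L (ch u j) <= L N by rewrite -hu' -Nu'; apply: L_mono; exact: home_sub_N.
rewrite /Psi Nu' hu' -/N; exact: arith4.
Qed.

Lemma same_home_dec u v w : w \in CC (home u) -> anc w v -> ~~ anc u v ->
  Psi w v < Psi u v.
Proof.
move=> wC wv nuv.
have hw : home w = home u := esym (home_unique (home_can u) wC).
have wN : w \in Nset u v.
  by apply: (subsetP (home_sub_N u v)); apply: (subsetP (C_sub _)) wC.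
have Nw : Nset w v = Nset u v.
  apply/eqP; rewrite eqEsubset (Nset_min (Nset_can u v) wN (Nset_v u v)) /=.
  apply: Nset_min; [exact: Nset_can | | exact: Nset_v].
  have uw : u \in home w by rewrite hw u_home.
  exact: (subsetP (home_sub_N w v)) _ uw.
by rewrite /Psi hw Nw wv nuv addn0 addn1.
Qed.


Lemma special_next u v u' u'' c : specialS u v u' -> step v u' u'' c ->
  u'' = v \/ Psi u'' v < Psi u v.
Proof.
case=> l [y [[Hl [lu lv]] [[lC yC] [[pu [yu' yu]] [[nu'v [nuv nvu]] K]]]]].
set S := home u in lC yC K.
have cS : canonical S := home_can u.
have [qS convS] := conv_canonical cS; have [qSS qSa qSc] := convS.
have uS : u \in S := u_home u.
have u'u : anc u' u by rewrite -pu; apply: anc_trans (anc_parent _ _) yu.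
have ly : anc l y.
  case/orP: (anc_total yu lu) => // yl.
  by move: nu'v; rewrite -pu (anc_trans (anc_parent _ _) (anc_trans yl lv)).
have yl : y != l.
  apply/negP => /eqP yl; move: nu'v; rewrite -pu yl (anc_trans (anc_parent _ _) lv).
  by [].
have lu' : anc l u' by rewrite -pu; apply: anc_parentr ly _; rewrite eq_sym.
have u'l : u' != l by apply: contra nu'v => /eqP ->.
have u'C : u' \notin CC S := K u' lu' u'l (anc_refl _ _).
have lS : l \in S := subsetP (C_sub S) l lC.
have u'S : u' \in S by apply: qSc uS (anc_trans (qSa _ lS) lu') u'u.
set A := S :\: CC S.
have u'A : u' \in A by rewrite in_setD u'C u'S.
set Q := comp A u'.
have cQ : canonical Q := canC cS u'A.
have yQ : y \notin Q by apply/negP => /(comp_sub u'A); rewrite in_setD yC.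
have adj : adjT u' y by rewrite /Defs.adjT /Defs.child pu eqxx yu'.
have u'CQ : u' \in CC Q := boundary cQ (comp_self A u') adj yQ.
have hu' : home u' = Q := esym (home_unique cQ u'CQ).
have [t [pt tl tu']] : exists t, [/\ parent t = l, t != l & anc t u'].
  by apply: anc_child lu' _; rewrite eq_sym.
have lt : anc l t by rewrite -pt anc_parent.
have tQ : t \in Q.
  rewrite inE; apply: upwalk tu' _ => w tw wu'.
  have lw := anc_trans lt tw.
  have wl : w != l.
    apply/negP => /eqP wl; move: tl; rewrite -wl in lt *.
    by rewrite (anc_antisym Htree tw lt) eqxx.
  rewrite in_setD (K w lw wl wu') /=.
  exact: qSc uS (anc_trans (qSa _ lS) lw) (anc_trans wu' u'u).
have [qQ convQ] := conv_canonical cQ.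
have lQ : l \notin Q by apply/negP => /(comp_sub u'A); rewrite in_setD lC.
have tq : t = qQ by apply: conv_top_unique convQ tQ _; rewrite pt.
have [_ qQa _] := convQ; rewrite -tq in qQa.
have tCQ : t \in CC Q.
  by apply: boundary cQ tQ _ lQ; rewrite /Defs.adjT /Defs.child pt eqxx tl orbT.
have ntv : ~~ anc t v.
  apply/negP => tv; have := Hl _ (anc_trans tu' u'u) tv => tl'.
  by move: tl; rewrite (anc_antisym Htree tl' lt) eqxx.
case=> u'v' [[_ [-> _]]|[nadj [R [HR u'CR st]]]]; first by left.
have ER := home_unique HR u'CR; rewrite hu' in ER; subst R.
case: st => [[u'v _]|[[vu' _]|[_ [_ [[X0 [y' [[y'Y y'H] [pu2 _]]]]|[Xn _]]]]]].
- by rewrite u'v in nu'v.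
- by move: nvu; rewrite (anc_trans vu' u'u).
- move: y'Y; rewrite inE => /and3P[y'C y'u' ny'v].
  have y't : anc y' t by apply: y'H; rewrite inE tCQ tu' ntv.
  have ty' : anc t y' by apply: qQa; apply: (subsetP (C_sub Q)).
  have ey : y' = t := anc_antisym Htree y't ty'.
  right; rewrite pu2 ey pt.
  exact: same_home_dec lC lv nuv.
- case/set0Pn: Xn => w; rewrite inE => /and3P[wC wv _].
  have tw : anc t w by apply: qQa; apply: (subsetP (C_sub Q)).
  by move: ntv; rewrite (anc_trans tw wv).
Qed.

Lemma step_le2 v u u' c : step v u u' c -> c <= 2.
Proof. by move/classify => []. Qed.

Lemma step_exists u v : u != v -> exists u' c, step v u u' c.
Proof.
move=> uv; case: (Classical_Prop.classic (adjG u v)) => [adj|nadj].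
  by exists v, 1; split => //; left.
set S := home u.
have uC : u \in CC S := home_C u.
have vC : v \notin CC S.
  by apply/negP => vC; apply: nadj; right; exists S; split => //; exact: home_can.
suff [u' [c st]] : exists u' c, stepR parent c1 k S v u u' c.
  by exists u', c; split => //; right; split => //; exists S; split => //; exact: home_can.
case: (boolP (anc u v)) => uv'.
  have uD : u \in [set z in CC S | anc z v] by rewrite inE uC uv'.
  have Dv : forall z, z \in [set z in CC S | anc z v] -> anc z v.
    by move=> z; rewrite inE => /andP[].
  have [x [xD xH]] := deepest_ex uD Dv.
  move: (xD); rewrite inE => /andP[xC xv].
  have xv' : x != v by apply: contra vC => /eqP <-.
  have [c0 [pc0 c0x c0v]] := anc_child xv xv'.
  exists c0, ((x != u) + 1); left; split => //; exists x; split; first by split.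
  by split => //; rewrite /Defs.child pc0 eqxx c0x.
case: (boolP (anc v u)) => vu.
  have uD : u \in [set z in CC S | anc v z && anc z u] by rewrite inE uC vu anc_refl.
  have Dv : forall z, z \in [set z in CC S | anc v z && anc z u] -> anc z u.
    by move=> z; rewrite inE => /and3P[].
  have [x [xD xH]] := highest_ex uD Dv.
  exists (parent x), ((x != u) + 1); right; left; split => //; split => //.
  by exists x; split.
case: (eqVneq [set z in CC S | anc z v && ~~ anc z u] set0) => X0.
  have uD : u \in [set z in CC S | anc z u && ~~ anc z v] by rewrite inE uC anc_refl uv'.
  have Dv : forall z, z \in [set z in CC S | anc z u && ~~ anc z v] -> anc z u.
    by move=> z; rewrite inE => /and3P[].
  have [y [yD yH]] := highest_ex uD Dv.
  exists (parent y), ((y != u) + 1); right; right; split => //; split => //.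
  by left; split => //; exists y; split.
have [x0 x0D] := set0Pn _ X0.
have Dv : forall z, z \in [set z in CC S | anc z v && ~~ anc z u] -> anc z v.
  by move=> z; rewrite inE => /and3P[].
have [x [xD xH]] := deepest_ex x0D Dv.
move: (xD); rewrite inE => /and3P[xC xv _].
have xv' : x != v by apply: contra vC => /eqP <-.
have [c0 [pc0 c0x c0v]] := anc_child xv xv'.
exists c0, ((x != u) + 1); right; right; split => //; split => //.
right; split => //; exists x; split; first by split.
by split => //; rewrite /Defs.child pc0 eqxx c0x.
Qed.

Lemma run_vv v m : run v v m -> m = 0.
Proof.
have H : forall u m', run v u m' -> u = v -> m' = 0.
  by move=> u m'; case=> // u1 u' c c' [uv _] _ E; rewrite E eqxx in uv.
by move=> r0; apply: H r0 erefl.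
Qed.

Lemma run_inv v u m : run v u m ->
  m = 0 \/ exists u' c c', [/\ step v u u' c, run v u' c' & m = c + c'].
Proof. by case=> [|u1 u' c c' st r']; [left | right; exists u', c, c']. Qed.

Lemma run_bound v u0 m0 : run v u0 m0 -> m0 <= 4 * Psi u0 v + 2.
Proof.
suff H : forall p u m, Psi u v = p -> run v u m -> m <= 4 * Psi u v + 2.
  by move=> r0; apply: H r0.
elim/ltn_ind => p IH uu m Hp Hr.
move: Hp; case: Hr => [u1|u u' c c' st r'] Hp; first by [].
have [c2 cls] := classify st.
have dec : forall u2 m2, Psi u2 v < Psi u v -> run v u2 m2 -> m2 <= 4 * Psi u2 v + 2.
  by move=> u2 m2 lt r2; apply: (IH (Psi u2 v)) => //; rewrite -Hp.
case: cls => [eu'|[nadj [nrm|[lc|sp]]]].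
- by subst u'; rewrite (run_vv r') addn0; apply: leq_trans c2 _; rewrite leq_addl.
- case: (eqVneq u' v) => [eu'|u'v].
    by subst u'; rewrite (run_vv r') addn0; apply: leq_trans c2 _; rewrite leq_addl.
  have lt := normal_dec nrm u'v.
  exact: arith5 c2 (dec _ _ lt r') lt.
- case: lc => u'C u'v nuv.
  have lt := same_home_dec u'C u'v nuv.
  exact: arith5 c2 (dec _ _ lt r') lt.
- have nuv : ~~ anc u v by case: sp => l [y [_ [_ [_ [[_ [H _]] _]]]]].
  have P0 : 0 < Psi u v by rewrite /Psi nuv addn1.
  case: (run_inv r') => [->|[u'' [c3 [c4 [st2 r'' ->]]]]].
    by rewrite addn0; apply: leq_trans c2 _; rewrite leq_addl.
  have c32 := step_le2 st2.
  case: (special_next sp st2) => [eu''|lt].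
    by subst u''; rewrite (run_vv r''); exact: arith7.
  exact: arith6 c2 c32 (dec _ _ lt r'') lt.
Qed.

Lemma reach_ex v u0 : exists m, reach v u0 m.
Proof.
suff H : forall p u, Psi u v = p -> exists m, reach v u m by apply: H.
elim/ltn_ind => p IH u Hp.
have dec : forall u2, Psi u2 v < Psi u v -> exists m, reach v u2 m.
  by move=> u2 lt; apply: (IH (Psi u2 v)) => //; rewrite -Hp.
case: (eqVneq u v) => [->|uv]; first by exists 0; exact: reach0.
have [u' [c st]] := step_exists uv.
have [_ cls] := classify st.
case: cls => [eu'|[nadj [nrm|[lc|sp]]]].
- by subst u'; exists (c + 0); apply: reachS st (reach0 _ _ _ _).
- case: (eqVneq u' v) => [eu'|u'v].
    by subst u'; exists (c + 0); apply: reachS st (reach0 _ _ _ _).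
  have [m rm] := dec _ (normal_dec nrm u'v).
  by exists (c + m); apply: reachS st rm.
- case: lc => u'C u'v nuv.
  have [m rm] := dec _ (same_home_dec u'C u'v nuv).
  by exists (c + m); apply: reachS st rm.
- have u'v : u' != v.
    by case: sp => l [y [_ [_ [_ [[H _] _]]]]]; apply: contra H => /eqP ->; apply: anc_refl.
  have [u'' [c2 st2]] := step_exists u'v.
  case: (special_next sp st2) => [eu''|lt].
    subst u''; exists (c + (c2 + 0)); apply: reachS st _.
    by apply: reachS st2 (reach0 _ _ _ _).
  have [m rm] := dec _ lt.
  by exists (c + (c2 + m)); apply: reachS st (reachS st2 rm).
Qed.

Lemma reach_run v u m : reach v u m -> run v u m.
Proof. by elim=> [|u1 u2 c c' st _ IH]; [exact: run0 | exact: runS st IH]. Qed.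

Lemma Psi_bound u v : Psi u v <= 4 * trunc_log 2 #|V| + 1.
Proof.
apply: arith8; rewrite /L; apply: leq_trunc_log; exact: max_card.
Qed.

Lemma final u v :
  (exists m, reach v u m /\ m <= 16 * (trunc_log 2 #|V|).+1) /\
  (forall m, run v u m -> m <= 16 * (trunc_log 2 #|V|).+1).
Proof.
have Hb : forall m, run v u m -> m <= 16 * (trunc_log 2 #|V|).+1.
  by move=> m rm; apply: arith9 (run_bound rm) (Psi_bound u v).
split => //; have [m rm] := reach_ex v u; exists m; split => //.
exact: Hb (reach_run rm).
Qed.

End Main.

Theorem theorem3 (k : nat) : 4 <= k ->
  exists c0 : nat,
  forall (V : finType) (r : V) (parent : V -> V) (c1 : V -> option V),
  is_rooted_tree r parent -> leftmost_choice parent c1 ->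
  forall u v : V,
    (exists m, reach parent c1 k v u m /\ m <= c0 * (trunc_log 2 #|V|).+1) /\
    (forall m, run parent c1 k v u m -> m <= c0 * (trunc_log 2 #|V|).+1).
Proof.
move=> Hk; exists 16 => V r parent c1 Htree Hlm u v.
exact: (final Htree Hlm Hk).
Qed.
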